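(* For $n,m\ge2$ and $k\ge1$, let $X^{n,m}_k$ be the set of $p\in([0,1]\cap\mathbb Q)^{n^2m^2}$ for which there exists a $k$-approximate trace $\tau:\mathbb F(n,m)\to\mathbb D\cap\mathbb Q(i)$ that is $k$-adapted to $p$. Then each $X^{n,m}_k$ is recursively enumerable, uniformly in $k$, $n$ and $m$.
   Context: $\mathbb D$ is the closed unit disc in $\mathbb C$, $[n]=\{1,\dots,n\}$. $\mathbb F(n,m)$ is the free product of $n$ cyclic groups of order $m$, with generators $u_1,\dots,u_n$ and a fixed effective enumeration of its elements. Functions $\tau:\mathbb F(n,m)\to\mathbb D$ are extended linearly to $\mathbb Q(i)\mathbb F(n,m)$. Approximate traces: fix an effective enumeration $(R_l)_{l\ge1}$ (independent of the group, via a fixed coding of $\mathbb Q(i)$ and of indices into the enumeration of the group $G$) of all requirements of the forms ''$\sum_{\lambda,\gamma}\overline{a_\lambda}a_\gamma\tau(\lambda^{-1}\gamma)\ge0$'' for $\sum a_\lambda u_\lambda\in\mathbb Q(i)G$ and ''$\tau(\gamma^{-1}\lambda\gamma)=\tau(\lambda)$'' for $\lambda,\gamma\in G$. For $k\ge1$, the relaxation $R^k_l$ of the first kind says $\sum\overline{a_\lambda}a_\gamma\tau(\lambda^{-1}\gamma)$ is within $1/k$ of the nonnegative real axis, and of the second kind says $|\tau(\gamma^{-1}\lambda\gamma)-\tau(\lambda)|<1/k$. A function $\tau:G\to\mathbb D$ is a $k$-approximate trace on $G$ if $R^k_1,\dots,R^k_k$ hold. Adaptedness: in $C^*(\mathbb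 F(n,m))$, $e^{n,m}_{v,i}$ is the spectral projection of $u_v$ for eigenvalue $\xi_m^i$ ($\xi_m$ a primitive $m$-th root of unity). Fix a computable function $(v,w,i,j,k,n,m)\mapsto s^{n,m}_{v,w,i,j,k}\in\mathbb Q(i)\mathbb F(n,m)$ with $\|e^{n,m}_{v,i}e^{n,m}_{w,j}-s^{n,m}_{v,w,i,j,k}\|<1/k$ in $C^*(\mathbb F(n,m))$. A function $\tau:\mathbb F(n,m)\to\mathbb D$ is $k$-adapted to $p\in[0,1]^{n^2m^2}$ if $|p(i,j|v,w)-\tau(s^{n,m}_{v,w,i,j,k})|<1/k$ for all $v,w\in[n]$, $i,j\in[m]$. *)

(* Defs.v *)
From HB Require Import structures.
From mathcomp Require Import all_boot all_order all_algebra.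
Unset Printing Implicit Defensive.
Import Order.TTheory GRing.Theory Num.Theory.

(*    enumerability are defined via programs of this language, so that *)
(*    classical axioms cannot trivialize them.                         *)

Inductive prog : Type :=
| PZero : prog
| PSucc : prog
| PProj : nat -> prog
| PComp : prog -> list prog -> prog
| PPrim : prog -> prog -> prog
| PMu   : prog -> prog.

Inductive eval : prog -> seq nat -> nat -> Prop :=
| eZero a : eval PZero a 0
| eSucc a : eval PSucc a (nth 0 a 0).+1
| eProj i a : eval (PProj i) a (nth 0 a i)
| eComp f gs a ys y : evals gs a ys -> eval f ys y -> eval (PComp f gs) a y
| ePrim0 f g a y : eval f a y -> eval (PPrim f g) (0 :: a) y
| ePrimS f g n a r y : eval (PPrim f g) (n :: a) r ->
    eval g [:: n, r & a] y -> eval (PPrim f g) (n.+1 :: a) y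
| eMu f a n : eval f (n :: a) 0 ->
    (forall i, i < n -> exists2 v, v != 0 & eval f (i :: a) v) ->
    eval (PMu f) a n
with evals : list prog -> seq nat -> seq nat -> Prop :=
| esNil a : evals nil a [::]
| esCons g gs a y ys : eval g a y -> evals gs a ys -> evals (g :: gs) a (y :: ys).

Definition halts (e : prog) (x : nat) : Prop := exists y, eval e [:: x] y.

Definition npair (x y : nat) : nat := (x + y) * (x + y).+1 %/ 2 + y.
Definition nunpair (z : nat) : nat * nat :=
  let w := (Nat.sqrt (8 * z + 1) - 1) %/ 2 in
  let t := w * w.+1 %/ 2 in (w - (z - t), z - t).

Fixpoint code_list (l : seq nat) : nat :=
  if l is x :: l' then (npair x (code_list l')).+1 else 0.

Fixpoint decode_list_fuel (fuel z : nat) : seq nat :=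
  match fuel, z with
  | 0, _ => [::]
  | _, 0 => [::]
  | f.+1, z'.+1 => (nunpair z').1 :: decode_list_fuel f (nunpair z').2
  end.
Definition decode_list (z : nat) : seq nat := decode_list_fuel z z.

Local Open Scope ring_scope.

Definition code_rat (q : rat) : nat :=
  npair (if numq q < 0 then 1%N else 0%N) (npair (absz (numq q)) (absz (denq q)).-1).

Definition decode_rat (z : nat) : rat :=
  let sr := nunpair z in let ab := nunpair sr.2 in
  (if sr.1 == 0%N then 1 else -1) * (ab.1%:R / (ab.2.+1)%:R).

Definition Qi : Type := (rat * rat)%type.
Definition qi_of_rat (q : rat) : Qi := (q, 0).
Definition qi0 : Qi := (0, 0).
Definition qadd (x y : Qi) : Qi := (x.1 + y.1, x.2 + y.2).
Definition qsub (x y : Qi) : Qi := (x.1 - y.1, x.2 - y.2).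
Definition qmul (x y : Qi) : Qi := (x.1 * y.1 - x.2 * y.2, x.1 * y.2 + x.2 * y.1).
Definition qconj (x : Qi) : Qi := (x.1, - x.2).
Definition qnorm2 (x : Qi) : rat := x.1 ^+ 2 + x.2 ^+ 2.

Definition code_qi (x : Qi) : nat := npair (code_rat x.1) (code_rat x.2).
Definition decode_qi (z : nat) : Qi :=
  (decode_rat (nunpair z).1, decode_rat (nunpair z).2).

(*    A word is a list of letters (v, e) standing for u_v ^ e          *)
(*    (generators indexed 0..n-1).  [nf n m w] is the reduced normal   *)
(*    form of the group element represented by w: the elements of     *)
(*    F(n,m) are exactly the reduced words (fixed points of nf).       *)

Definition word := seq (nat * nat).

(* push a letter onto a reversed reduced word *)
Definition push_letter (m : nat) (st : word) (l : nat * nat) : word :=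
  let e := (l.2 %% m)%N in
  if e == 0%N then st else
  match st with
  | (v', e') :: rest =>
      if v' == l.1 then
        let f := ((e' + e) %% m)%N in
        if f == 0%N then rest else (l.1, f) :: rest
      else (l.1, e) :: st
  | [::] => [:: (l.1, e)]
  end.

Definition nf (n m : nat) (w : word) : word :=
  rev (foldl (fun st l => if (l.1 < n)%N then push_letter m st l else st) [::] w).

Definition gmul (n m : nat) (x y : word) : word := nf n m (x ++ y).
Definition ginv (n m : nat) (x : word) : word :=
  nf n m (rev (map (fun l => (l.1, (m - l.2 %% m)%N)) x)).

(* Fixed effective enumeration of F(n,m) (surjective onto reduced words). *)
Definition code_word (w : word) : nat := code_list (map (fun l => npair l.1 l.2) w).
Definition group_elt (n m : nat) (l : nat) : word :=
  nf n m (map nunpair (decode_list l)).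

(* Elements of the group algebra Q(i)F(n,m): formal finite sums
   sum a_j u_(g_j), given as lists of (coefficient, word). *)
Definition gralg := seq (Qi * word).
Definition code_gralg (x : gralg) : nat :=
  code_list (map (fun aw => npair (code_qi aw.1) (code_word aw.2)) x).

Definition tau_ext (n m : nat) (tau : word -> Qi) (x : gralg) : Qi :=
  foldr (fun aw acc => qadd (qmul aw.1 (tau (nf n m aw.2))) acc) qi0 x.

(* 5. Approximate traces.  The fixed effective enumeration (R_l)_(l>=1)*)
(*    of requirements: R_(l+1) is decoded from the natural number l.   *)
(*    Tag 0: positivity requirement for sum_j a_j u_(lambda_j);        *)
(*    other tags: conjugation invariance tau(g^-1 h g) = tau(h).       *)

(* z is within distance 1/k of the nonnegative real axis (strictly) *)
Definition near_nonneg (k : nat) (z : Qi) : bool :=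
  if 0 <= z.1 then z.2 ^+ 2 < (k%:R ^+ 2)^-1
  else qnorm2 z < (k%:R ^+ 2)^-1.

Definition pos_form (n m : nat) (tau : word -> Qi) (x : gralg) : Qi :=
  foldr qadd qi0
    [seq qmul (qmul (qconj p.1) q.1) (tau (gmul n m (ginv n m p.2) q.2))
       | p <- x, q <- x].

Definition relaxed_req (n m k : nat) (tau : word -> Qi) (l : nat) : Prop :=
  let tr := nunpair l in
  if tr.1 == 0%N then
    let x : gralg :=
      map (fun c => (decode_qi (nunpair c).1, group_elt n m (nunpair c).2))
          (decode_list tr.2) in
    near_nonneg k (pos_form n m tau x)
  else
    let lam := group_elt n m (nunpair tr.2).1 in
    let gam := group_elt n m (nunpair tr.2).2 in
    qnorm2 (qsub (tau (gmul n m (ginv n m gam) (gmul n m lam gam))) (tau lam))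
      < (k%:R ^+ 2)^-1.

Definition approx_trace (n m k : nat) (tau : word -> Qi) : Prop :=
  forall l, (l < k)%N -> relaxed_req n m k tau l.

Definition disc_valued (n m : nat) (tau : word -> Qi) : Prop :=
  forall w, qnorm2 (tau (nf n m w)) <= 1.

(*    Indices v,w in [n], i,j in [m] are 0-based here.  A point         *)
(*    p in [0,1]^{n^2 m^2} is a function p v w i j = p(i,j|v,w).        *)
(*    s v w i j k n m is the fixed computable s^{n,m}_{v,w,i,j,k}.       *)

Definition sfun := nat -> nat -> nat -> nat -> nat -> nat -> nat -> gralg.

Definition computable_s (s : sfun) : Prop :=
  exists e : prog, forall v w i j k n m : nat,
    eval e [:: code_list [:: v; w; i; j; k; n; m]] (code_gralg (s v w i j k n m)).

Definition adapted (n m k : nat) (s : sfun)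
    (p : 'I_n -> 'I_n -> 'I_m -> 'I_m -> rat) (tau : word -> Qi) : Prop :=
  forall (v w : 'I_n) (i j : 'I_m),
    qnorm2 (qsub (qi_of_rat (p v w i j))
                 (tau_ext n m tau (s v w i j k n m))) < (k%:R ^+ 2)^-1.

Definition in_X (n m k : nat) (s : sfun)
    (p : 'I_n -> 'I_n -> 'I_m -> 'I_m -> rat) : Prop :=
  exists tau : word -> Qi,
    [/\ disc_valued n m tau, approx_trace n m k tau & adapted n m k s p tau].

Definition code_input (n m k : nat) (p : 'I_n -> 'I_n -> 'I_m -> 'I_m -> rat) : nat :=
  code_list [:: n; m; k; code_list
    (flatten [seq flatten [seq flatten [seq [seq code_rat (p v w i j)
        | j <- enum 'I_m] | i <- enum 'I_m] | w <- enum 'I_n] | v <- enum 'I_n])].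

(* Main.v *)
Require Import Defs.
From Stdlib Require Import PeanoNat.
From mathcomp Require Import all_boot all_order all_algebra.
From mathcomp Require Import zify ring lra.
Import Order.TTheory GRing.Theory Num.Theory.
Set Warnings "-notation-overridden,-ambiguous-paths".

Fixpoint prog_ind2 (P : prog -> Prop) (H0 : P PZero) (H1 : P PSucc)
  (H2 : forall i, P (PProj i))
  (H3 : forall f gs, P f -> List.Forall P gs -> P (PComp f gs))
  (H4 : forall f g, P f -> P g -> P (PPrim f g))
  (H5 : forall f, P f -> P (PMu f)) (p : prog) {struct p} : P p :=
  match p with
  | PZero => H0 | PSucc => H1 | PProj i => H2 i
  | PComp f gs => H3 f gs (prog_ind2 P H0 H1 H2 H3 H4 H5 f)
      ((fix F (l : list prog) : List.Forall P l :=
         match l with nil => List.Forall_nil P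
         | g :: l' => List.Forall_cons g (prog_ind2 P H0 H1 H2 H3 H4 H5 g) (F l') end) gs)
  | PPrim f g => H4 f g (prog_ind2 P H0 H1 H2 H3 H4 H5 f) (prog_ind2 P H0 H1 H2 H3 H4 H5 g)
  | PMu f => H5 f (prog_ind2 P H0 H1 H2 H3 H4 H5 f)
  end.

Lemma eval_det p : forall a y1 y2, eval p a y1 -> eval p a y2 -> y1 = y2.
Proof.
elim/prog_ind2: p.
- by move=> a y1 y2 H1 H2; inversion H1; inversion H2.
- by move=> a y1 y2 H1 H2; inversion H1; inversion H2.
- by move=> i a y1 y2 H1 H2; inversion H1; inversion H2.
- move=> f gs IHf IHgs a y1 y2 H1 H2; inversion H1; inversion H2; subst.
  have E : ys = ys0.
    clear -IHgs H3 H9; move: ys ys0 H3 H9; elim: IHgs.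
      by move=> ys ys0 A B; inversion A; inversion B.
    move=> g l Hg _ IH ys ys0 A B; inversion A; inversion B; subst.
    by rewrite (Hg _ _ _ H1 H7) (IH _ _ H4 H10).
  by subst; apply: IHf; eauto.
- move=> f g IHf IHg a y1 y2 H1 H2.
  case: a H1 H2 => [|n a] H1 H2; first by inversion H1.
  elim: n y1 y2 H1 H2 => [|n IH] y1 y2 H1 H2.
    inversion H1; inversion H2; subst; eauto.
  inversion H1; inversion H2; subst.
  have E := IH _ _ H6 H13; subst; eauto.
- move=> f IHf a y1 y2 H1 H2; inversion H1; inversion H2; subst.
  case: (ltngtP y1 y2) => // L.
  + have [v v0 Hv] := H8 _ L. by have E := IHf _ _ _ H0 Hv; rewrite -E in v0.
  + have [v v0 Hv] := H3 _ L. by have E := IHf _ _ _ H7 Hv; rewrite -E in v0.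
Qed.

Set Implicit Arguments. Unset Strict Implicit.
Fixpoint primrec (f g : seq nat -> nat) (n : nat) (a : seq nat) : nat :=
  if n is n'.+1 then g (n' :: primrec f g n' a :: a) else f a.

Definition pr (k : nat) (f : seq nat -> nat) :=
  exists P, forall a, size a = k -> eval P a (f a).

Lemma pr_ext k f g : pr k f -> (forall a, size a = k -> f a = g a) -> pr k g.
Proof. by move=> [P HP] E; exists P => a Ha; rewrite -E //; apply: HP. Qed.

Lemma pr_zero k : pr k (fun _ => 0).
Proof. by exists PZero => a _; constructor. Qed.

Lemma pr_proj k i : pr k (fun a => nth 0 a i).
Proof. by exists (PProj i) => a _; constructor. Qed.

Lemma pr_succ k f : pr k f -> pr k (fun a => (f a).+1).
Proof.
move=> [P HP]; exists (PComp PSucc [:: P]) => a Ha.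
apply: (@eComp _ _ _ [:: f a]); first by constructor; [apply: HP|constructor].
exact: eSucc.
Qed.

Lemma pr_const k c : pr k (fun _ => c).
Proof. elim: c => [|c IH]; [exact: pr_zero|exact: pr_succ]. Qed.

Lemma pr_comp k j f gs : pr j f -> size gs = j -> List.Forall (pr k) gs ->
  pr k (fun a => f (map (fun g => g a) gs)).
Proof.
move=> [F HF] Hj Hgs.
have [Ps HPs] : exists Ps, forall a, size a = k -> evals Ps a (map (fun g => g a) gs).
  elim: Hgs => [|g l [G HG] _ [Ps HPs]]; first by exists nil => a _; constructor.
  by exists (G :: Ps) => a Ha /=; constructor; [apply: HG|apply: HPs].
exists (PComp F Ps) => a Ha; econstructor; first exact: HPs.
by apply: HF; rewrite size_map.
Qed.

Lemma map_nth_iota (a : seq nat) : map (fun i => nth 0 a i) (iota 0 (size a)) = a.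
Proof. by rewrite -/(mkseq _ _) mkseq_nth. Qed.

Lemma pr_rec k f g h : pr k f -> pr k.+2 g -> pr k h ->
  pr k (fun a => primrec f g (h a) a).
Proof.
move=> [F HF] [G HG] [H HH].
exists (PComp (PPrim F G) (H :: map PProj (iota 0 k))) => a Ha.
apply: (@eComp _ _ _ (h a :: a)).
  constructor; first exact: HH.
  rewrite -{2}(map_nth_iota a) Ha; elim: (iota 0 k) => [|i l IH] /=; constructor => //.
  exact: eProj.
elim: (h a) => [|n IH] /=; first by constructor; apply: HF.
econstructor; first exact: IH.
by apply: HG => /=; rewrite Ha.
Qed.

Set Implicit Arguments. Unset Strict Implicit.

Lemma pr_reindex k (idx : seq nat) f : pr (size idx) f ->
  pr k (fun b => f (map (nth 0 b) idx)).
Proof.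
move=> Hf.
have := @pr_comp k (size idx) f (map (fun i b => nth 0 b i) idx) Hf (size_map _ _).
have H : List.Forall (pr k) (map (fun i b => nth 0 b i) idx).
  elim: idx {Hf} => [|i l IH] /=; constructor => //; exact: pr_proj.
move=> /(_ H) H'; apply: (pr_ext H') => a _; by rewrite -map_comp.
Qed.

Lemma drop_iotaN (b : seq nat) j : map (nth 0 b) (iota j (size b - j)) = drop j b.
Proof.
apply: (@eq_from_nth _ 0); rewrite ?size_map ?size_iota ?size_drop // => i Hi.
by rewrite (nth_map 0) ?size_iota // nth_iota // nth_drop.
Qed.

Lemma pr_shift j k f : pr k f -> pr (j + k) (fun b => f (drop j b)).
Proof.
move=> Hf; have Hf' : pr (size (iota j k)) f by rewrite size_iota.
apply: (pr_ext (pr_reindex (j + k) Hf')) => b Hb.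
by rewrite -drop_iotaN Hb addKn.
Qed.

Lemma pr1_lift k (f : nat -> nat) g : pr 1 (fun a => f (nth 0 a 0)) -> pr k g ->
  pr k (fun a => f (g a)).
Proof.
move=> Hf Hg; have := @pr_comp k 1 _ [:: g] Hf erefl.
by move=> /(_ (List.Forall_cons _ Hg (List.Forall_nil _))).
Qed.

Lemma pr2_lift k (f : nat -> nat -> nat) g1 g2 :
  pr 2 (fun a => f (nth 0 a 0) (nth 0 a 1)) -> pr k g1 -> pr k g2 ->
  pr k (fun a => f (g1 a) (g2 a)).
Proof.
move=> Hf H1 H2; have := @pr_comp k 2 _ [:: g1; g2] Hf erefl.
by move=> /(_ (List.Forall_cons _ H1 (List.Forall_cons _ H2 (List.Forall_nil _)))).
Qed.

Lemma pr3_lift k (f : nat -> nat -> nat -> nat) g1 g2 g3 :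
  pr 3 (fun a => f (nth 0 a 0) (nth 0 a 1) (nth 0 a 2)) -> pr k g1 -> pr k g2 -> pr k g3 ->
  pr k (fun a => f (g1 a) (g2 a) (g3 a)).
Proof.
move=> Hf H1 H2 H3; have := @pr_comp k 3 _ [:: g1; g2; g3] Hf erefl.
by move=> /(_ (List.Forall_cons _ H1 (List.Forall_cons _ H2 (List.Forall_cons _ H3 (List.Forall_nil _))))).
Qed.

Lemma pr_iter k x0 h step : pr k x0 -> pr k h -> pr k.+1 step ->
  pr k (fun a => iter (h a) (fun acc => step (acc :: a)) (x0 a)).
Proof.
move=> H0 Hh Hs.
have Hg : pr k.+2 (fun b => step (nth 0 b 1 :: drop 2 b)).
  have Hs' : pr (size (1 :: iota 2 k)) step by rewrite /= size_iota.
  apply: (pr_ext (pr_reindex k.+2 Hs')) => b Hb.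
  by rewrite -drop_iotaN Hb !subSS subn0.
apply: (pr_ext (pr_rec H0 Hg Hh)) => a _.
by elim: (h a) => //= n ->; rewrite drop0.
Qed.

Lemma pr_iteri k x0 h step : pr k x0 -> pr k h -> pr k.+2 step ->
  pr k (fun a => primrec x0 step (h a) a).
Proof. move=> H0 Hh Hs; exact: pr_rec. Qed.

Lemma pr_add k f g : pr k f -> pr k g -> pr k (fun a => f a + g a).
Proof.
apply: pr2_lift.
have := @pr_iter 2 (fun a => nth 0 a 1) (fun a => nth 0 a 0) (fun b => (nth 0 b 0).+1)
  (pr_proj _ _) (pr_proj _ _) (pr_succ (pr_proj _ _)).
move=> HH; apply: (pr_ext HH) => a _ /=; elim: (nth 0 a 0) => //= n ->; by rewrite addSn.
Qed.

Lemma pr_mul k f g : pr k f -> pr k g -> pr k (fun a => f a * g a).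
Proof.
apply: pr2_lift.
have := @pr_iter 2 (fun _ => 0) (fun a => nth 0 a 0) (fun b => nth 0 b 0 + nth 0 b 2)
  (pr_zero _) (pr_proj _ _) (pr_add (pr_proj _ _) (pr_proj _ _)).
move=> HH; apply: (pr_ext HH) => a _ /=; elim: (nth 0 a 0) => //= n ->; by rewrite mulSn addnC.
Qed.

Lemma pr_pred k f : pr k f -> pr k (fun a => (f a).-1).
Proof.
apply: pr1_lift.
have := @pr_iteri 1 (fun _ => 0) (fun a => nth 0 a 0) (fun b => nth 0 b 0)
  (pr_zero _) (pr_proj _ _) (pr_proj _ _).
by move=> HH; apply: (pr_ext HH) => a _ /=; case: (nth 0 a 0).
Qed.

Lemma pr_sub k f g : pr k f -> pr k g -> pr k (fun a => f a - g a).
Proof.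
apply: pr2_lift.
have := @pr_iter 2 (fun a => nth 0 a 0) (fun a => nth 0 a 1) (fun b => (nth 0 b 0).-1)
  (pr_proj _ _) (pr_proj _ _) (pr_pred (pr_proj _ _)).
move=> HH; apply: (pr_ext HH) => a _ /=; elim: (nth 0 a 1) => /= [|n ->]; first by rewrite subn0.
by rewrite subnS.
Qed.

Definition prb k (P : seq nat -> bool) := pr k (fun a => nat_of_bool (P a)).

Lemma prb_eq0 k f : pr k f -> prb k (fun a => f a == 0).
Proof.
move=> Hf; apply: (@pr1_lift k (fun x => nat_of_bool (x == 0)) f _ Hf).
have := @pr_iter 1 (fun _ => 1) (fun a => nth 0 a 0) (fun b => 0)
  (pr_const _ _) (pr_proj _ _) (pr_zero _).
by move=> HH; apply: (pr_ext HH) => a _ /=; case: (nth 0 a 0) => //= n; rewrite iterS.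
Qed.

Lemma prb_leq k f g : pr k f -> pr k g -> prb k (fun a => f a <= g a).
Proof. move=> Hf Hg; exact: prb_eq0 (pr_sub Hf Hg). Qed.

Lemma prb_ltn k f g : pr k f -> pr k g -> prb k (fun a => f a < g a).
Proof. move=> Hf Hg; exact: prb_leq (pr_succ Hf) Hg. Qed.

Lemma prb_and k P Q : prb k P -> prb k Q -> prb k (fun a => P a && Q a).
Proof. move=> HP HQ; apply: (pr_ext (pr_mul HP HQ)) => a _; by case: (P a); case: (Q a). Qed.

Lemma prb_neg k P : prb k P -> prb k (fun a => ~~ P a).
Proof. move=> HP; apply: (pr_ext (pr_sub (pr_const k 1) HP)) => a _; by case: (P a). Qed.

Lemma prb_or k P Q : prb k P -> prb k Q -> prb k (fun a => P a || Q a).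
Proof.
move=> HP HQ; apply: (pr_ext (prb_neg (prb_and (prb_neg HP) (prb_neg HQ)))) => a _.
by case: (P a); case: (Q a).
Qed.

Lemma prb_eq k f g : pr k f -> pr k g -> prb k (fun a => f a == g a).
Proof.
move=> Hf Hg; apply: (pr_ext (prb_and (prb_leq Hf Hg) (prb_leq Hg Hf))) => a _.
by rewrite eqn_leq.
Qed.

Lemma prb_const k (b : bool) : prb k (fun _ => b).
Proof. exact: pr_const. Qed.

Lemma pr_if k c f g : prb k c -> pr k f -> pr k g -> pr k (fun a => if c a then f a else g a).
Proof.
move=> Hc Hf Hg; apply: (pr_ext (pr_add (pr_mul Hc Hf) (pr_mul (prb_neg Hc) Hg))) => a _.
by case: (c a) => /=; rewrite ?mul1n ?mul0n ?addn0.
Qed.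

Lemma prb_if k c f g : prb k c -> prb k f -> prb k g -> prb k (fun a => if c a then f a else g a).
Proof.
move=> Hc Hf Hg; apply: (pr_ext (pr_if Hc Hf Hg)) => a _; by case: (c a).
Qed.

Lemma pr_sum k body h : pr k.+1 body -> pr k h ->
  pr k (fun a => \sum_(i < h a) body (nat_of_ord i :: a)).
Proof.
move=> Hb Hh.
have Hg : pr k.+2 (fun b => nth 0 b 1 + body (nth 0 b 0 :: drop 2 b)).
  apply: pr_add; first exact: pr_proj.
  have Hs' : pr (size (0 :: iota 2 k)) body by rewrite /= size_iota.
  apply: (pr_ext (pr_reindex k.+2 Hs')) => b Hb'.
  by rewrite /= -drop_iotaN Hb' !subSS subn0.
apply: (pr_ext (pr_rec (pr_zero _) Hg Hh)) => a _.
elim: (h a) => [|n IH]; first by rewrite big_ord0.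
by rewrite big_ord_recr /= IH drop0.
Qed.

Lemma prb_all k P h : prb k.+1 P -> pr k h ->
  prb k (fun a => all (fun i => P (i :: a)) (iota 0 (h a))).
Proof.
move=> HP Hh.
have Hg : pr k.+2 (fun b => nth 0 b 1 * P (nth 0 b 0 :: drop 2 b)).
  apply: pr_mul; first exact: pr_proj.
  have Hs' : pr (size (0 :: iota 2 k)) (fun a => nat_of_bool (P a)) by rewrite /= size_iota.
  apply: (pr_ext (pr_reindex k.+2 Hs')) => b Hb'.
  by rewrite /= -drop_iotaN Hb' !subSS subn0.
apply: (pr_ext (pr_rec (pr_const _ 1) Hg Hh)) => a _.
elim: (h a) => [|n IH] //.
have -> : iota 0 n.+1 = iota 0 n ++ [:: n] by rewrite -addn1 iotaD.
rewrite all_cat /= IH drop0 andbT.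
by case: (all _ _); case: (P _).
Qed.

Lemma prb_has k P h : prb k.+1 P -> pr k h ->
  prb k (fun a => has (fun i => P (i :: a)) (iota 0 (h a))).
Proof.
move=> HP Hh; apply: (pr_ext (prb_neg (prb_all (prb_neg HP) Hh))) => a _.
by rewrite -has_predC /= (eq_has (a2 := fun i => P (i :: a))) // => i /=; rewrite negbK.
Qed.

Set Implicit Arguments. Unset Strict Implicit.

Lemma sum_lt_min x N : \sum_(i < x) ((i < N) : nat) = minn N x.
Proof.
elim: x => [|x IH]; first by rewrite big_ord0 minn0.
rewrite big_ord_recr /= IH; case: (ltnP x N) => H /=; lia.
Qed.

Definition divf (x d : nat) := if d == 0 then 0 else \sum_(i < x) ((i.+1 * d <= x) : nat).

Lemma divfE x d : divf x d = x %/ d.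
Proof.
rewrite /divf; case: d => [|d] /=; first by rewrite divn0.
rewrite (eq_bigr (fun i : 'I_x => ((i : nat) < x %/ d.+1) : nat)); last first.
  by move=> i _; rewrite -leq_divRL.
by rewrite sum_lt_min; apply/minn_idPl; apply: leq_div.
Qed.

Lemma pr_div k f g : pr k f -> pr k g -> pr k (fun a => f a %/ g a).
Proof.
move=> Hf Hg; apply: (@pr2_lift k divn f g) => //.
have H : pr 2 (fun a => divf (nth 0 a 0) (nth 0 a 1)).
  apply: pr_if; first exact: prb_eq0 (pr_proj _ _).
    exact: pr_zero.
  apply: (pr_sum (body := fun b => nat_of_bool ((nth 0 b 0).+1 * nth 0 b 2 <= nth 0 b 1))).
    by apply: prb_leq; [apply: pr_mul; [apply: pr_succ|]|]; apply: pr_proj.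
  exact: pr_proj.
by apply: (pr_ext H) => a _; rewrite divfE.
Qed.

Lemma pr_mod k f g : pr k f -> pr k g -> pr k (fun a => f a %% g a).
Proof.
move=> Hf Hg; apply: (pr_ext (pr_sub Hf (pr_mul (pr_div Hf Hg) Hg))) => a _.
by rewrite {1}(divn_eq (f a) (g a)) addKn.
Qed.

Lemma pr_npair k f g : pr k f -> pr k g -> pr k (fun a => npair (f a) (g a)).
Proof.
move=> Hf Hg; rewrite /npair.
apply: pr_add => //; apply: pr_div; last exact: pr_const.
by apply: pr_mul; [|apply: pr_succ]; apply: pr_add.
Qed.

Definition Tn j := j * j.+1 %/ 2.
Lemma Tn2 j : Tn j * 2 = j * j.+1.
Proof.
elim: j => [|j IH] //; rewrite /Tn.
have -> : j.+1 * j.+2 = j * j.+1 + j.+1 * 2 by lia.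
by rewrite -IH divnMDl // mulnK // mulnDl.
Qed.
Lemma TnS j : Tn j.+1 = Tn j + j.+1.
Proof. have := Tn2 j.+1; have := Tn2 j; lia. Qed.
Lemma Tn_mono a b : a <= b -> Tn a <= Tn b.
Proof.
move=> /subnK <-; elim: (b - a) => [|c IH] //; rewrite addSn TnS; lia.
Qed.
Lemma Tn_ge j : j <= Tn j.
Proof. elim: j => [|j IH] //; rewrite TnS; lia. Qed.

Lemma npairE x y : npair x y = Tn (x + y) + y.
Proof. by []. Qed.

Lemma npair_surj z : exists x y, npair x y = z.
Proof.
elim: z => [|z [x [y E]]]; first by exists 0, 0.
case: x E => [|x] E.
  exists y.+1, 0; rewrite -E !npairE !addn0 add0n TnS; lia.
exists x, y.+1; rewrite -E !npairE (addnS x y) (addSn x y); lia.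
Qed.

Lemma npair_inj x y x' y' : npair x y = npair x' y' -> x = x' /\ y = y'.
Proof.
rewrite !npairE => E.
have H : x + y = x' + y'.
  case: (ltngtP (x + y) (x' + y')) => // L.
  - have := Tn_mono L; rewrite TnS; lia.
  - have := Tn_mono L; rewrite TnS; lia.
rewrite H in E; lia.
Qed.

Lemma nunpair_npair x y : nunpair (npair x y) = (x, y).
Proof.
rewrite /nunpair.
set z := npair x y; set s := x + y.
have Ez : z = Tn s + y by [].
have T2 := Tn2 s.
have E8 : 8 * z + 1 = (2 * s + 1) * (2 * s + 1) + 8 * y by rewrite Ez; nia.
have L1 : 2 * s + 1 <= Nat.sqrt (8 * z + 1).
  apply/ssrnat.leP; apply Nat.sqrt_le_square; apply/ssrnat.leP; rewrite E8; lia.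
have L2 : Nat.sqrt (8 * z + 1) < 2 * s + 3.
  apply/ssrnat.ltP; apply Nat.sqrt_lt_square; apply/ssrnat.ltP; rewrite E8; have : y <= s by lia.
  nia.
have -> : (Nat.sqrt (8 * z + 1) - 1) %/ 2 = s.
  have [-> | ->] : Nat.sqrt (8 * z + 1) = 2 * s + 1 \/ Nat.sqrt (8 * z + 1) = 2 * s + 2 by lia.
    by rewrite addnK mulKn.
  have -> : 2 * s + 2 - 1 = s * 2 + 1 by lia.
  by rewrite divnMDl // divn_small // addn0.
rewrite -/(Tn s) Ez addKn; congr pair; lia.
Qed.

Lemma nunpairK z : npair (nunpair z).1 (nunpair z).2 = z.
Proof. by have [x [y <-]] := npair_surj z; rewrite nunpair_npair. Qed.

(* search-based unpairing *)
Definition ps z := \sum_(i < z) ((Tn i.+1 <= z) : nat).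

Lemma ps_npair x y : ps (npair x y) = x + y.
Proof.
rewrite /ps (eq_bigr (fun i : 'I_(npair x y) => ((i : nat) < x + y) : nat)).
  rewrite sum_lt_min; apply/minn_idPl; rewrite npairE; have := Tn_ge (x + y); lia.
move=> i _; congr nat_of_bool; have E := npairE x y.
case: (ltnP i (x + y)) => H.
  by apply/idP; apply: leq_trans (Tn_mono H) _; rewrite E; apply: leq_addr.
apply/negP => H'; have := Tn_mono (H : (x + y).+1 <= i.+1); rewrite TnS; lia.
Qed.

Lemma pr_Tn k f : pr k f -> pr k (fun a => Tn (f a)).
Proof. move=> Hf; apply: pr_div; [apply: pr_mul; [|apply: pr_succ] => //|exact: pr_const]. Qed.

Lemma pr_ps k f : pr k f -> pr k (fun a => ps (f a)).
Proof.
move=> Hf; apply: (@pr1_lift k ps f) => //.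
apply: (pr_sum (body := fun b => nat_of_bool (Tn (nth 0 b 0).+1 <= nth 0 b 1))); last exact: pr_proj.
by apply: prb_leq; [apply: pr_Tn; apply: pr_succ|]; apply: pr_proj.
Qed.

Lemma pr_snd k f : pr k f -> pr k (fun a => (nunpair (f a)).2).
Proof.
move=> Hf; apply: (pr_ext (pr_sub Hf (pr_Tn (pr_ps Hf)))) => a _.
have [x [y E]] := npair_surj (f a); rewrite -E nunpair_npair ps_npair /=.
by rewrite npairE addKn.
Qed.

Lemma pr_fst k f : pr k f -> pr k (fun a => (nunpair (f a)).1).
Proof.
move=> Hf; apply: (pr_ext (pr_sub (pr_ps Hf) (pr_snd Hf))) => a _.
have [x [y E]] := npair_surj (f a); rewrite -E nunpair_npair ps_npair /=.
by rewrite addnK.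
Qed.

Set Implicit Arguments. Unset Strict Implicit.
Arguments nunpair : simpl never.
Arguments decode_list : simpl never.

Lemma nunpair_snd_le c : (nunpair c).2 <= c.
Proof. have [x [y <-]] := npair_surj c; rewrite nunpair_npair npairE /=; lia. Qed.
Lemma nunpair_fst_le c : (nunpair c).1 <= c.
Proof. have [x [y <-]] := npair_surj c; rewrite nunpair_npair npairE /=; have := Tn_ge (x+y); lia. Qed.

Lemma fuel_indep f f' z : z <= f -> z <= f' -> decode_list_fuel f z = decode_list_fuel f' z.
Proof.
elim: f f' z => [|f IH] [|f'] [|z] //= H1 H2.
by rewrite (IH f') //; apply: leq_trans (nunpair_snd_le z) _.
Qed.

Lemma decode_list0 : decode_list 0 = [::].
Proof. by []. Qed.

Lemma decode_listS c : decode_list c.+1 = (nunpair c).1 :: decode_list (nunpair c).2.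
Proof.
rewrite /decode_list /=; congr cons; apply: fuel_indep => //; exact: nunpair_snd_le.
Qed.

Lemma code_listK l : decode_list (code_list l) = l.
Proof. elim: l => [|x l IH] //=; by rewrite decode_listS nunpair_npair /= IH. Qed.

Lemma decode_listK c : code_list (decode_list c) = c.
Proof.
elim: c {-2}c (leqnn c) => [|n IH] [|c] // H.
rewrite decode_listS /= IH; first by rewrite nunpairK.
apply: leq_trans (nunpair_snd_le c) _; lia.
Qed.

Lemma size_decode_le c : size (decode_list c) <= c.
Proof.
elim: c {-2}c (leqnn c) => [|n IH] [|c] // H.
rewrite decode_listS /= ltnS; apply: leq_trans (IH _ _) (nunpair_snd_le c).
apply: leq_trans (nunpair_snd_le c) _; lia.
Qed.

Definition ccons x l := (npair x l).+1.
Definition chd c := (nunpair c.-1).1.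
Definition ctl c := (nunpair c.-1).2.
Definition cnth i c := chd (iter i ctl c).

Lemma ctl_decode c : decode_list (ctl c) = behead (decode_list c).
Proof. by case: c => [|c] //; rewrite decode_listS. Qed.

Lemma cnthE i c : cnth i c = nth 0 (decode_list c) i.
Proof.
have ctl0 : forall j, iter j ctl 0 = 0 by elim=> //= j ->.
elim: i c => [|i IH] [|c].
- by [].
- by rewrite decode_listS.
- by rewrite /cnth ctl0.
- by rewrite /cnth iterSr -/(cnth i _) IH ctl_decode decode_listS.
Qed.

Lemma pr_ccons k f g : pr k f -> pr k g -> pr k (fun a => ccons (f a) (g a)).
Proof. by move=> Hf Hg; apply: pr_succ; apply: pr_npair. Qed.

Lemma pr_chd k f : pr k f -> pr k (fun a => chd (f a)).
Proof. by move=> Hf; apply: pr_fst; apply: pr_pred. Qed.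
Lemma pr_ctl k f : pr k f -> pr k (fun a => ctl (f a)).
Proof. by move=> Hf; apply: pr_snd; apply: pr_pred. Qed.

Lemma pr_cnth k f g : pr k f -> pr k g -> pr k (fun a => cnth (f a) (g a)).
Proof.
move=> Hf Hg; apply: pr_chd.
apply: (pr_iter (step := fun b => ctl (nth 0 b 0))) => //.
by apply: pr_ctl; apply: pr_proj.
Qed.

Definition csize c := \sum_(i < c) ((iter i ctl c != 0) : nat).

Lemma csizeE c : csize c = size (decode_list c).
Proof.
rewrite /csize (eq_bigr (fun i : 'I_c => ((i : nat) < size (decode_list c)) : nat)).
  by rewrite sum_lt_min; apply/minn_idPl; apply: size_decode_le.
move=> i _; congr nat_of_bool; move: (i : nat) => j; clear i.
elim: j c => [|j IH] [|c].
- by [].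
- by rewrite decode_listS.
- have ctl0 : forall j, iter j ctl 0 = 0 by elim=> //= j' ->.
  by rewrite ctl0.
- by rewrite iterSr IH ctl_decode decode_listS.
Qed.

Lemma pr_csize k f : pr k f -> pr k (fun a => csize (f a)).
Proof.
move=> Hf; apply: (@pr1_lift k csize f) => //.
apply: (pr_sum (body := fun b => nat_of_bool (iter (nth 0 b 0) ctl (nth 0 b 1) != 0))); last exact: pr_proj.
apply: prb_neg; apply: prb_eq0.
by apply: (pr_iter (step := fun b => ctl (nth 0 b 0))); try apply: pr_ctl; apply: pr_proj.
Qed.

Lemma foldl_nth (T R : Type) (f : R -> T -> R) z (l : seq T) x0 :
  foldl f z l = (iter (size l) (fun p => (p.1.+1, f p.2 (nth x0 l p.1))) (0, z)).2.
Proof.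
have H : forall n, n <= size l ->
  iter n (fun p => (p.1.+1, f p.2 (nth x0 l p.1))) (0, z) = (n, foldl f z (take n l)).
  elim=> [|n IH] Hn /=; first by rewrite take0.
  rewrite IH; last lia.
  by rewrite /= (take_nth x0) // -cats1 foldl_cat.
by rewrite H // take_size.
Qed.

Lemma pr_foldl k g c i0 : pr k.+2 g -> pr k c -> pr k i0 ->
  pr k (fun a => foldl (fun acc x => g (x :: acc :: a)) (i0 a) (decode_list (c a))).
Proof.
move=> Hg Hc Hi.
set G := fun b => g (cnth (nth 0 b 0) (c (drop 2 b)) :: nth 0 b 1 :: drop 2 b).
have HG : pr k.+2 G.
  have := @pr_comp k.+2 k.+2 g ((fun b => cnth (nth 0 b 0) (c (drop 2 b))) :: map (fun i b => nth 0 b i) (iota 1 k.+1)) Hg.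
  rewrite /= size_map size_iota => /(_ erefl) H.
  have H' : List.Forall (pr k.+2) ((fun b => cnth (nth 0 b 0) (c (drop 2 b))) :: map (fun i b => nth 0 b i) (iota 1 k.+1)).
    constructor.
      apply: pr_cnth; first exact: pr_proj.
      exact: (@pr_shift 2 k c Hc).
    elim: (iota 1 k.+1) => [|i l IH] /=; constructor => //; exact: pr_proj.
  apply: (pr_ext (H H')) => b Hb; rewrite /G -(@drop_iotaN b 2) Hb !subSS subn0 -map_comp.
  by [].
apply: (pr_ext (pr_rec Hi HG (pr_csize Hc))) => a _.
rewrite csizeE (foldl_nth _ _ _ 0).
have E : forall n, primrec i0 G n a =
  (iter n (fun p => (p.1.+1, g (nth 0 (decode_list (c a)) p.1 :: p.2 :: a))) (0, i0 a)).2
  /\ (iter n (fun p => (p.1.+1, g (nth 0 (decode_list (c a)) p.1 :: p.2 :: a))) (0, i0 a)).1 = n.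
  elim=> [|n [IH1 IH2]] //=; split => //.
  by rewrite /G /= drop0 IH1 IH2 cnthE.
  by rewrite IH2.
by rewrite (proj1 (E _)).
Qed.

Lemma foldl_ccons s l : foldl (fun acc x => ccons x acc) (code_list s) l = code_list (rev l ++ s).
Proof.
elim: l s => [|x l IH] s //=.
have -> : ccons x (code_list s) = code_list (x :: s) by [].
by rewrite IH rev_cons -cats1 -catA.
Qed.

Lemma pr_rev k c : pr k c -> pr k (fun a => code_list (rev (decode_list (c a)))).
Proof.
move=> Hc.
have := @pr_foldl k (fun b => ccons (nth 0 b 0) (nth 0 b 1)) c (fun _ => 0)
    (pr_ccons (pr_proj _ _) (pr_proj _ _)) Hc (pr_zero _).
move=> H; apply: (pr_ext H) => a _.
by rewrite -[0]/(code_list [::]) foldl_ccons cats0.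
Qed.

Lemma pr_foldr k g c i0 : pr k.+2 g -> pr k c -> pr k i0 ->
  pr k (fun a => foldr (fun x acc => g (x :: acc :: a)) (i0 a) (decode_list (c a))).
Proof.
move=> Hg Hc Hi.
have := pr_foldl Hg (pr_rev Hc) Hi.
move=> H; apply: (pr_ext H) => a _ /=.
by rewrite code_listK foldl_rev.
Qed.

Lemma pr_map k g c : pr k.+1 g -> pr k c ->
  pr k (fun a => code_list (map (fun x => g (x :: a)) (decode_list (c a)))).
Proof.
move=> Hg Hc.
have Hg' : pr k.+2 (fun b => ccons (g (nth 0 b 0 :: drop 2 b)) (nth 0 b 1)).
  apply: pr_ccons; last exact: pr_proj.
  have Hs' : pr (size (0 :: iota 2 k)) g by rewrite /= size_iota.
  apply: (pr_ext (pr_reindex k.+2 Hs')) => b Hb.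
  by rewrite /= -drop_iotaN Hb !subSS subn0.
have := pr_foldr Hg' Hc (pr_zero _).
move=> H; apply: (pr_ext H) => a _ /=.
by elim: (decode_list (c a)) => //= x l ->; rewrite drop0.
Qed.

Set Implicit Arguments. Unset Strict Implicit.

Definition decw (c : nat) : word := map nunpair (decode_list c).

Lemma decwK c : code_word (decw c) = c.
Proof.
rewrite /code_word /decw -map_comp (eq_map (g := id)) ?map_id ?decode_listK //.
by move=> x /=; rewrite nunpairK.
Qed.

Lemma code_wordK w : decw (code_word w) = w.
Proof.
rewrite /code_word /decw code_listK -map_comp (eq_map (g := id)) ?map_id //.
by case=> x y /=; rewrite nunpair_npair.
Qed.

Lemma decw0 : decw 0 = [::]. Proof. by []. Qed.
Lemma decwS c : decw c.+1 = nunpair (nunpair c).1 :: decw (nunpair c).2.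
Proof. by rewrite /decw decode_listS. Qed.
Lemma code_word_cons l w : code_word (l :: w) = ccons (npair l.1 l.2) (code_word w).
Proof. by []. Qed.

Definition push_c (m S v e0 : nat) : nat :=
  let e := e0 %% m in
  if e == 0 then S else
  if S == 0 then ccons (npair v e) 0 else
  if (nunpair (chd S)).1 == v then
     (let f := ((nunpair (chd S)).2 + e) %% m in
      if f == 0 then ctl S else ccons (npair v f) (ctl S))
  else ccons (npair v e) S.

Lemma push_cE m S v e0 : push_c m S v e0 = code_word (push_letter m (decw S) (v, e0)).
Proof.
rewrite /push_c /push_letter.
case: (e0 %% m == 0); first by rewrite decwK.
case: S => [|c]; first by [].
rewrite decwS /chd /ctl succnK.
case E: (nunpair (nunpair c).1) => [v' e'].
have -> : (c.+1 == 0) = false by [].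
rewrite [(v', e').2]/= [(v, e0).2]/= [(v, e0).1]/= [(v', e').1]/=.
case: (v' == v).
  by case: (_ == 0); rewrite ?decwK // code_word_cons decwK.
by rewrite code_word_cons -(decwK c.+1) decwS E.
Qed.

Lemma pr_push_c k fm fS fv fe : pr k fm -> pr k fS -> pr k fv -> pr k fe ->
  pr k (fun a => push_c (fm a) (fS a) (fv a) (fe a)).
Proof.
move=> Hm HS Hv He; rewrite /push_c.
apply: pr_if; first by apply: prb_eq0; apply: pr_mod.
  done.
apply: pr_if; first by apply: prb_eq0.
  by apply: pr_ccons; [apply: pr_npair => //; apply: pr_mod|apply: pr_zero].
apply: pr_if; first by apply: prb_eq => //; apply: pr_fst; apply: pr_chd.
  apply: pr_if.
      by apply: prb_eq0; apply: pr_mod => //; apply: pr_add; [apply: pr_snd; apply: pr_chd|apply: pr_mod].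
    by apply: pr_ctl.
  apply: pr_ccons; last by apply: pr_ctl.
  apply: pr_npair => //; apply: pr_mod => //; apply: pr_add; [apply: pr_snd; apply: pr_chd|apply: pr_mod] => //.
by apply: pr_ccons => //; apply: pr_npair => //; apply: pr_mod.
Qed.

Definition nfstep_c (n m S x : nat) : nat :=
  if (nunpair x).1 < n then push_c m S (nunpair x).1 (nunpair x).2 else S.

Lemma nf_c_foldl n m c :
  code_word (nf n m (decw c)) =
  code_list (rev (decode_list (foldl (fun acc x => nfstep_c n m acc x) 0 (decode_list c)))).
Proof.
rewrite /nf /decw.
have -> : forall (l : seq nat) st, foldl (fun st l => if l.1 < n then push_letter m st l else st) st (map nunpair l) = decw (foldl (fun acc x => nfstep_c n m acc x) (code_word st) l).
  elim=> [|x l IH] st /=; first by rewrite code_wordK.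
  rewrite IH; congr decw; congr foldl.
  rewrite /nfstep_c; case: (_ < n) => //.
  by rewrite push_cE code_wordK -surjective_pairing.
rewrite /code_word map_rev /decw -map_comp.
congr (code_list (rev _)).
rewrite (eq_map (g := id)) ?map_id // => x /=; exact: nunpairK.
Qed.

Lemma pr_nf k fn fm fc : pr k fn -> pr k fm -> pr k fc ->
  pr k (fun a => code_word (nf (fn a) (fm a) (decw (fc a)))).
Proof.
move=> Hn Hm Hc.
have Hs : pr k.+2 (fun b => nfstep_c (fn (drop 2 b)) (fm (drop 2 b)) (nth 0 b 1) (nth 0 b 0)).
  have Hn' := pr_shift 2 Hn; have Hm' := pr_shift 2 Hm.
  rewrite /nfstep_c; apply: pr_if.
    by apply: prb_ltn => //; apply: pr_fst; apply: pr_proj.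
    by apply: pr_push_c => //; [apply: pr_proj|apply: pr_fst; apply: pr_proj|apply: pr_snd; apply: pr_proj].
  exact: pr_proj.
have := pr_rev (pr_foldl Hs Hc (pr_zero _)).
move=> H; apply: (pr_ext H) => a _; by rewrite nf_c_foldl /= drop0.
Qed.

Lemma pr_cat k c1 c2 : pr k c1 -> pr k c2 ->
  pr k (fun a => code_list (decode_list (c1 a) ++ decode_list (c2 a))).
Proof.
move=> H1 H2.
have := pr_foldr (pr_ccons (pr_proj k.+2 0) (pr_proj k.+2 1)) H1 H2.
move=> H; apply: (pr_ext H) => a _ /=.
elim: (decode_list (c1 a)) => /= [|x l ->]; first by rewrite decode_listK.
by [].
Qed.

Lemma pr_gmul k fn fm f1 f2 : pr k fn -> pr k fm -> pr k f1 -> pr k f2 ->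
  pr k (fun a => code_word (gmul (fn a) (fm a) (decw (f1 a)) (decw (f2 a)))).
Proof.
move=> Hn Hm H1 H2; have := pr_nf Hn Hm (pr_cat H1 H2).
move=> H; apply: (pr_ext H) => a _.
rewrite /gmul; congr (code_word (nf _ _ _)).
by rewrite /decw code_listK map_cat.
Qed.

Lemma pr_ginv k fn fm fc : pr k fn -> pr k fm -> pr k fc ->
  pr k (fun a => code_word (ginv (fn a) (fm a) (decw (fc a)))).
Proof.
move=> Hn Hm Hc.
have Hmap := @pr_map k (fun b => npair (nunpair (nth 0 b 0)).1 (fm (drop 1 b) - (nunpair (nth 0 b 0)).2 %% fm (drop 1 b))) fc
  (pr_npair (pr_fst (pr_proj _ _)) (pr_sub (pr_shift 1 Hm) (pr_mod (pr_snd (pr_proj _ _)) (pr_shift 1 Hm)))) Hc.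
have := pr_nf Hn Hm (pr_rev Hmap).
move=> H; apply: (pr_ext H) => a _.
rewrite /ginv; congr (code_word (nf _ _ _)).
rewrite /decw !code_listK map_rev -!map_comp; congr rev.
by apply: eq_map => x /=; rewrite nunpair_npair drop0.
Qed.

Set Implicit Arguments. Unset Strict Implicit.

Local Open Scope ring_scope.
Lemma decode_rat_code q : decode_rat (code_rat q) = q.
Proof.
rewrite /decode_rat /code_rat !nunpair_npair /=.
rewrite prednK ?absz_gt0 ?denq_neq0 //.
have Hd : ((`|denq q|%N)%:R : rat) = (denq q)%:~R.
  by rewrite natr_absz gtr0_norm // denq_gt0.
rewrite Hd natr_absz; rewrite -[RHS](divq_num_den q).
case: (ltrP (numq q) 0) => H /=.
  by rewrite ltr0_norm // mulN1r rmorphN mulNr opprK.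
by rewrite ger0_norm // mul1r.
Qed.
Local Close Scope ring_scope.

(* rational codes: (p - q) / (d + 1) *)
Definition mkr (p q d : nat) := npair p (npair q d).
Definition rp r := (nunpair r).1.
Definition rq r := (nunpair (nunpair r).2).1.
Definition rd r := (nunpair (nunpair r).2).2.
Local Open Scope ring_scope.
Definition rv (r : nat) : rat := ((rp r)%:R - (rq r)%:R) / ((rd r).+1)%:R.
Local Close Scope ring_scope.

Lemma rp_mk p q d : rp (mkr p q d) = p. Proof. by rewrite /rp /mkr nunpair_npair. Qed.
Lemma rq_mk p q d : rq (mkr p q d) = q. Proof. by rewrite /rq /mkr !nunpair_npair. Qed.
Lemma rd_mk p q d : rd (mkr p q d) = d. Proof. by rewrite /rd /mkr !nunpair_npair. Qed.

Lemma rv_mk p q d : rv (mkr p q d) = ((p%:R - q%:R) / (d.+1)%:R)%R.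
Proof. by rewrite /rv rp_mk rq_mk rd_mk. Qed.

Definition radd x y := mkr (rp x * (rd y).+1 + rp y * (rd x).+1) (rq x * (rd y).+1 + rq y * (rd x).+1)
  ((rd x).+1 * (rd y).+1).-1.
Definition rmul x y := mkr (rp x * rp y + rq x * rq y) (rp x * rq y + rq x * rp y)
  ((rd x).+1 * (rd y).+1).-1.
Definition rneg x := mkr (rq x) (rp x) (rd x).
Definition rlt x y := rp x * (rd y).+1 + rq y * (rd x).+1 < rp y * (rd x).+1 + rq x * (rd y).+1.
Definition rle x y := rp x * (rd y).+1 + rq y * (rd x).+1 <= rp y * (rd x).+1 + rq x * (rd y).+1.

Lemma prodS a b : ((a.+1 * b.+1).-1).+1 = a.+1 * b.+1.
Proof. by rewrite prednK // muln_gt0. Qed.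

Lemma rv_add x y : rv (radd x y) = (rv x + rv y)%R.
Proof.
rewrite /radd rv_mk /rv prodS !natrM !natrD !natrM.
have H1 : ((rd x).+1%:R : rat) != 0%R by rewrite pnatr_eq0.
have H2 : ((rd y).+1%:R : rat) != 0%R by rewrite pnatr_eq0.
move: H1 H2; move: ((rd x).+1%:R : rat) ((rd y).+1%:R : rat) => D1 D2 H1 H2.
by field; rewrite H1 H2.
Qed.

Lemma rv_mul x y : rv (rmul x y) = (rv x * rv y)%R.
Proof.
rewrite /rmul rv_mk /rv prodS !natrM !natrD !natrM.
have H1 : ((rd x).+1%:R : rat) != 0%R by rewrite pnatr_eq0.
have H2 : ((rd y).+1%:R : rat) != 0%R by rewrite pnatr_eq0.
move: H1 H2; move: ((rd x).+1%:R : rat) ((rd y).+1%:R : rat) => D1 D2 H1 H2.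
by field; rewrite H1 H2.
Qed.

Lemma rv_neg x : rv (rneg x) = (- rv x)%R.
Proof. rewrite /rneg rv_mk /rv; rewrite -mulNr opprB //. Qed.

Lemma nat_ltr A B C D : ((A%:R - B%:R : rat) < C%:R - D%:R)%R = (A + D < C + B).
Proof.
apply/idP/idP => H.
  by rewrite -(ltr_nat rat) !natrD; lra.
by move: H; rewrite -(ltr_nat rat) !natrD => H; lra.
Qed.

Lemma nat_ler A B C D : ((A%:R - B%:R : rat) <= C%:R - D%:R)%R = (A + D <= C + B).
Proof.
apply/idP/idP => H.
  by rewrite -(ler_nat rat) !natrD; lra.
by move: H; rewrite -(ler_nat rat) !natrD => H; lra.
Qed.

Lemma rv_lt x y : rlt x y = (rv x < rv y)%R.
Proof.
rewrite /rv ltr_pdivrMr ?ltr0Sn // mulrAC ltr_pdivlMr ?ltr0Sn //.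
rewrite !mulrBl -!natrM nat_ltr /rlt; congr (_ < _); lia.
Qed.

Lemma rv_le x y : rle x y = (rv x <= rv y)%R.
Proof.
rewrite /rv ler_pdivrMr ?ltr0Sn // mulrAC ler_pdivlMr ?ltr0Sn //.
rewrite !mulrBl -!natrM nat_ler /rle; congr (_ <= _); lia.
Qed.

Lemma pr_rp k f : pr k f -> pr k (fun a => rp (f a)). Proof. exact: pr_fst. Qed.
Lemma pr_rq k f : pr k f -> pr k (fun a => rq (f a)). Proof. by move=> H; apply: pr_fst; apply: pr_snd. Qed.
Lemma pr_rd k f : pr k f -> pr k (fun a => rd (f a)). Proof. by move=> H; apply: pr_snd; apply: pr_snd. Qed.
Lemma pr_mkr k f g h : pr k f -> pr k g -> pr k h -> pr k (fun a => mkr (f a) (g a) (h a)).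
Proof. by move=> Hf Hg Hh; apply: pr_npair => //; apply: pr_npair. Qed.

Lemma pr_radd k f g : pr k f -> pr k g -> pr k (fun a => radd (f a) (g a)).
Proof.
move=> Hf Hg; rewrite /radd.
have Df := pr_succ (pr_rd Hf); have Dg := pr_succ (pr_rd Hg).
apply: pr_mkr; last by apply: pr_pred; apply: pr_mul.
  by apply: pr_add; apply: pr_mul => //; apply: pr_rp.
by apply: pr_add; apply: pr_mul => //; apply: pr_rq.
Qed.

Lemma pr_rmul k f g : pr k f -> pr k g -> pr k (fun a => rmul (f a) (g a)).
Proof.
move=> Hf Hg; rewrite /rmul.
have Df := pr_succ (pr_rd Hf); have Dg := pr_succ (pr_rd Hg).
have Pf := pr_rp Hf; have Pg := pr_rp Hg; have Qf := pr_rq Hf; have Qg := pr_rq Hg.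
apply: pr_mkr; last by apply: pr_pred; apply: pr_mul.
  by apply: pr_add; apply: pr_mul.
by apply: pr_add; apply: pr_mul.
Qed.

Lemma pr_rneg k f : pr k f -> pr k (fun a => rneg (f a)).
Proof. by move=> Hf; apply: pr_mkr; [apply: pr_rq|apply: pr_rp|apply: pr_rd]. Qed.

Lemma prb_rlt k f g : pr k f -> pr k g -> prb k (fun a => rlt (f a) (g a)).
Proof.
move=> Hf Hg; rewrite /rlt.
have Df := pr_succ (pr_rd Hf); have Dg := pr_succ (pr_rd Hg).
have Pf := pr_rp Hf; have Pg := pr_rp Hg; have Qf := pr_rq Hf; have Qg := pr_rq Hg.
by apply: prb_ltn; apply: pr_add; apply: pr_mul.
Qed.

Lemma prb_rle k f g : pr k f -> pr k g -> prb k (fun a => rle (f a) (g a)).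
Proof.
move=> Hf Hg; rewrite /rle.
have Df := pr_succ (pr_rd Hf); have Dg := pr_succ (pr_rd Hg).
have Pf := pr_rp Hf; have Pg := pr_rp Hg; have Qf := pr_rq Hf; have Qg := pr_rq Hg.
by apply: prb_leq; apply: pr_add; apply: pr_mul.
Qed.

Definition crat c := if (nunpair c).1 == 0 then mkr (nunpair (nunpair c).2).1 0 (nunpair (nunpair c).2).2
  else mkr 0 (nunpair (nunpair c).2).1 (nunpair (nunpair c).2).2.

Lemma rv_crat c : rv (crat c) = decode_rat c.
Proof.
rewrite /crat /decode_rat; case: (_ == 0); rewrite rv_mk ?mul1r ?subr0 //.
by rewrite sub0r !mulNr mul1r.
Qed.

Lemma pr_crat k f : pr k f -> pr k (fun a => crat (f a)).
Proof.
move=> Hf; rewrite /crat; apply: pr_if; first by apply: prb_eq0; apply: pr_fst.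
  by apply: pr_mkr; [apply: pr_fst; apply: pr_snd|apply: pr_zero|apply: pr_snd; apply: pr_snd].
by apply: pr_mkr; [apply: pr_zero|apply: pr_fst; apply: pr_snd|apply: pr_snd; apply: pr_snd].
Qed.

Definition qv (z : nat) : Qi := (rv (nunpair z).1, rv (nunpair z).2).
Definition qadd_c x y := npair (radd (nunpair x).1 (nunpair y).1) (radd (nunpair x).2 (nunpair y).2).
Definition qsub_c x y := npair (radd (nunpair x).1 (rneg (nunpair y).1)) (radd (nunpair x).2 (rneg (nunpair y).2)).
Definition qmul_c x y := npair
  (radd (rmul (nunpair x).1 (nunpair y).1) (rneg (rmul (nunpair x).2 (nunpair y).2)))
  (radd (rmul (nunpair x).1 (nunpair y).2) (rmul (nunpair x).2 (nunpair y).1)).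
Definition qconj_c x := npair (nunpair x).1 (rneg (nunpair x).2).
Definition qnorm2_c x := radd (rmul (nunpair x).1 (nunpair x).1) (rmul (nunpair x).2 (nunpair x).2).
Definition cqi c := npair (crat (nunpair c).1) (crat (nunpair c).2).

Lemma np1 x y : (nunpair (npair x y)).1 = x. Proof. by rewrite nunpair_npair. Qed.
Lemma np2 x y : (nunpair (npair x y)).2 = y. Proof. by rewrite nunpair_npair. Qed.
Lemma qv_add x y : qv (qadd_c x y) = qadd (qv x) (qv y).
Proof. by rewrite /qv /qadd_c np1 np2 2!rv_add. Qed.
Lemma qv_sub x y : qv (qsub_c x y) = qsub (qv x) (qv y).
Proof. by rewrite /qv /qsub_c np1 np2 2!rv_add 2!rv_neg. Qed.
Lemma qv_mul x y : qv (qmul_c x y) = qmul (qv x) (qv y).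
Proof. by rewrite /qv /qmul_c np1 np2 2!rv_add rv_neg 4!rv_mul. Qed.
Lemma qv_conj x : qv (qconj_c x) = qconj (qv x).
Proof. by rewrite /qv /qconj_c np1 np2 rv_neg. Qed.
Lemma rv_norm2 x : rv (qnorm2_c x) = qnorm2 (qv x).
Proof. by rewrite /qnorm2_c /qnorm2 /qv rv_add 2!rv_mul /= !expr2. Qed.
Lemma qv_cqi c : qv (cqi c) = decode_qi c.
Proof. by rewrite /qv /cqi np1 np2 2!rv_crat. Qed.
Lemma rv0 : rv 0 = 0%R.
Proof. by rewrite -[0]/(mkr 0 0 0) rv_mk subrr mul0r. Qed.
Lemma qv0 : qv 0 = qi0.
Proof. by rewrite /qv -[0]/(npair 0 0) np1 np2 rv0. Qed.

Lemma pr_qadd k f g : pr k f -> pr k g -> pr k (fun a => qadd_c (f a) (g a)).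
Proof.
move=> Hf Hg; have F1 := pr_fst Hf; have F2 := pr_snd Hf; have G1 := pr_fst Hg; have G2 := pr_snd Hg.
by apply: pr_npair; apply: pr_radd.
Qed.
Lemma pr_qsub k f g : pr k f -> pr k g -> pr k (fun a => qsub_c (f a) (g a)).
Proof.
move=> Hf Hg; have F1 := pr_fst Hf; have F2 := pr_snd Hf; have G1 := pr_rneg (pr_fst Hg); have G2 := pr_rneg (pr_snd Hg).
by apply: pr_npair; apply: pr_radd.
Qed.
Lemma pr_qmul k f g : pr k f -> pr k g -> pr k (fun a => qmul_c (f a) (g a)).
Proof.
move=> Hf Hg; have F1 := pr_fst Hf; have F2 := pr_snd Hf; have G1 := pr_fst Hg; have G2 := pr_snd Hg.
apply: pr_npair; apply: pr_radd; first exact: pr_rmul.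
  by apply: pr_rneg; apply: pr_rmul.
all: exact: pr_rmul.
Qed.
Lemma pr_qconj k f : pr k f -> pr k (fun a => qconj_c (f a)).
Proof. by move=> Hf; apply: pr_npair; [apply: pr_fst|apply: pr_rneg; apply: pr_snd]. Qed.
Lemma pr_qnorm2 k f : pr k f -> pr k (fun a => qnorm2_c (f a)).
Proof.
move=> Hf; have F1 := pr_fst Hf; have F2 := pr_snd Hf.
by apply: pr_radd; apply: pr_rmul.
Qed.
Lemma pr_cqi k f : pr k f -> pr k (fun a => cqi (f a)).
Proof. by move=> Hf; apply: pr_npair; apply: pr_crat; [apply: pr_fst|apply: pr_snd]. Qed.

Set Implicit Arguments. Unset Strict Implicit.

Definition tau_c (T c : nat) : nat :=
  foldr (fun e acc => if (nunpair e).1 == c then (nunpair e).2 else acc) 0 (decode_list T).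
Definition tauT (T : nat) : word -> Qi := fun w => qv (tau_c T (code_word w)).

Lemma pr_tau k fT fc : pr k fT -> pr k fc -> pr k (fun a => tau_c (fT a) (fc a)).
Proof.
move=> HT Hc.
have Hg : pr k.+2 (fun b => if (nunpair (nth 0 b 0)).1 == fc (drop 2 b) then (nunpair (nth 0 b 0)).2 else nth 0 b 1).
  apply: pr_if; last exact: pr_proj.
    by apply: prb_eq; [apply: pr_fst; apply: pr_proj|apply: (pr_shift 2 Hc)].
  by apply: pr_snd; apply: pr_proj.
have := pr_foldr Hg HT (pr_zero _).
by move=> H; apply: (pr_ext H) => a _ /=; rewrite drop0.
Qed.

Definition nfc n m c := code_word (nf n m (decw c)).
Definition gmulc n m x y := code_word (gmul n m (decw x) (decw y)).
Definition ginvc n m x := code_word (ginv n m (decw x)).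

Lemma pr_nfc k fn fm fc : pr k fn -> pr k fm -> pr k fc -> pr k (fun a => nfc (fn a) (fm a) (fc a)).
Proof. exact: pr_nf. Qed.
Lemma pr_gmulc k fn fm f1 f2 : pr k fn -> pr k fm -> pr k f1 -> pr k f2 ->
  pr k (fun a => gmulc (fn a) (fm a) (f1 a) (f2 a)).
Proof. exact: pr_gmul. Qed.
Lemma pr_ginvc k fn fm fc : pr k fn -> pr k fm -> pr k fc -> pr k (fun a => ginvc (fn a) (fm a) (fc a)).
Proof. exact: pr_ginv. Qed.

Definition term_c n m T p q :=
  qmul_c (qmul_c (qconj_c (cqi (nunpair p).1)) (cqi (nunpair q).1))
    (tau_c T (gmulc n m (ginvc n m (nfc n m (nunpair p).2)) (nfc n m (nunpair q).2))).

Definition posform_c n m T L :=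
  foldr (fun p acc => qadd_c (foldr (fun q acc' => qadd_c (term_c n m T p q) acc') 0 (decode_list L)) acc)
    0 (decode_list L).

Lemma pr_term k fn fm fT fp fq : pr k fn -> pr k fm -> pr k fT -> pr k fp -> pr k fq ->
  pr k (fun a => term_c (fn a) (fm a) (fT a) (fp a) (fq a)).
Proof.
move=> Hn Hm HT Hp Hq; rewrite /term_c.
apply: pr_qmul; first by apply: pr_qmul; [apply: pr_qconj|]; apply: pr_cqi; apply: pr_fst.
apply: pr_tau => //; apply: pr_gmulc => //.
  by apply: pr_ginvc => //; apply: pr_nfc => //; apply: pr_snd.
by apply: pr_nfc => //; apply: pr_snd.
Qed.

Lemma pr_posform k fn fm fT fL : pr k fn -> pr k fm -> pr k fT -> pr k fL ->
  pr k (fun a => posform_c (fn a) (fm a) (fT a) (fL a)).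
Proof.
move=> Hn Hm HT HL.
set sh2 := fun (f : seq nat -> nat) b => f (drop 2 b).
have S2 : forall f, pr k f -> pr k.+2 (sh2 f) by move=> f Hf; exact: (pr_shift 2 Hf).
have Hin : pr k.+2 (fun b => foldr (fun q acc' => qadd_c (term_c (fn (drop 2 b)) (fm (drop 2 b)) (fT (drop 2 b)) (nth 0 b 0) q) acc') 0 (decode_list (fL (drop 2 b)))).
  have Hg : pr k.+4 (fun c => qadd_c (term_c (fn (drop 4 c)) (fm (drop 4 c)) (fT (drop 4 c)) (nth 0 c 2) (nth 0 c 0)) (nth 0 c 1)).
    apply: pr_qadd; last exact: pr_proj.
    by apply: pr_term; [apply: (pr_shift 4 Hn)|apply: (pr_shift 4 Hm)|apply: (pr_shift 4 HT)|apply: pr_proj|apply: pr_proj].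
  have := pr_foldr Hg (S2 _ HL) (pr_zero _).
  move=> H; apply: (pr_ext H) => b _ /=.
  by rewrite /sh2.
have Hg : pr k.+2 (fun b => qadd_c (foldr (fun q acc' => qadd_c (term_c (fn (drop 2 b)) (fm (drop 2 b)) (fT (drop 2 b)) (nth 0 b 0) q) acc') 0 (decode_list (fL (drop 2 b)))) (nth 0 b 1)).
  by apply: pr_qadd => //; apply: pr_proj.
have := pr_foldr Hg HL (pr_zero _).
by move=> H; apply: (pr_ext H) => a _ /=; rewrite /posform_c drop0.
Qed.

Set Implicit Arguments. Unset Strict Implicit.

Lemma qaddA x y z : qadd (qadd x y) z = qadd x (qadd y z).
Proof. by rewrite /qadd /= !addrA. Qed.
Lemma qadd0 x : qadd qi0 x = x.
Proof. by case: x => a b; rewrite /qadd /= !add0r. Qed.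

Lemma foldr_qadd_cat s1 s2 : foldr qadd qi0 (s1 ++ s2) = qadd (foldr qadd qi0 s1) (foldr qadd qi0 s2).
Proof. elim: s1 => [|x s IH] /=; by rewrite ?qadd0 // IH qaddA. Qed.

Lemma foldr_allpairs (A : Type) (F : A -> A -> Qi) (s t : seq A) :
  foldr qadd qi0 [seq F p q | p <- s, q <- t] =
  foldr (fun p acc => qadd (foldr (fun q acc' => qadd (F p q) acc') qi0 t) acc) qi0 s.
Proof.
elim: s => [|p s IH] //=.
rewrite foldr_qadd_cat IH; congr qadd.
by elim: t {IH} => //= q t ->.
Qed.

Lemma qv_foldr (A : Type) (f : A -> nat) (l : seq A) :
  qv (foldr (fun x acc => qadd_c (f x) acc) 0 l) = foldr (fun x acc => qadd (qv (f x)) acc) qi0 l.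
Proof. elim: l => [|x l IH] /=; [exact: qv0|by rewrite qv_add IH]. Qed.

Lemma eq_foldr (A B : Type) (f g : A -> B -> B) z l :
  (forall x y, f x y = g x y) -> foldr f z l = foldr g z l.
Proof. by move=> E; elim: l => //= x l ->. Qed.

Definition decg n m c : Qi * word := (decode_qi (nunpair c).1, group_elt n m (nunpair c).2).

Lemma qv_term n m T p q : qv (term_c n m T p q) =
  qmul (qmul (qconj (decg n m p).1) (decg n m q).1) (tauT T (gmul n m (ginv n m (decg n m p).2) (decg n m q).2)).
Proof.
rewrite /term_c qv_mul qv_mul qv_conj 2!qv_cqi /tauT.
by rewrite /gmulc /ginvc /nfc !code_wordK.
Qed.

Lemma qv_posform n m T L :
  qv (posform_c n m T L) = pos_form n m (tauT T) (map (decg n m) (decode_list L)).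
Proof.
rewrite /posform_c /pos_form foldr_allpairs foldr_map qv_foldr.
apply: eq_foldr => p acc; congr qadd.
rewrite foldr_map qv_foldr; apply: eq_foldr => q acc'.
by rewrite qv_term.
Qed.

Definition kk K := mkr (K * K) 0 0.
Definition rone := mkr 1 0 0.

Lemma rv_kk K : rv (kk K) = ((K%:R) ^+ 2)%R.
Proof. by rewrite /kk rv_mk subr0 divr1 natrM expr2. Qed.
Lemma rv_one : rv rone = 1%R.
Proof. by rewrite /rone rv_mk subr0 divr1. Qed.

Lemma lt_invk2 (K : nat) (r : rat) : 0 < K -> (r < (K%:R ^+ 2)^-1)%R = (r * K%:R ^+ 2 < 1)%R.
Proof.
move=> HK; rewrite -[X in (r < X)%R]div1r ltr_pdivlMr //.
by rewrite exprn_gt0 // ltr0n.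
Qed.

Lemma rlt_k2 K x : 0 < K -> rlt (rmul x (kk K)) rone = (rv x < (K%:R ^+ 2)^-1)%R.
Proof. by move=> HK; rewrite rv_lt rv_mul rv_kk rv_one lt_invk2. Qed.

Definition near_c K z :=
  if rle 0 (nunpair z).1 then rlt (rmul (rmul (nunpair z).2 (nunpair z).2) (kk K)) rone
  else rlt (rmul (qnorm2_c z) (kk K)) rone.

Lemma near_cE K z : 0 < K -> near_c K z = near_nonneg K (qv z).
Proof.
move=> HK; rewrite /near_c /near_nonneg rv_le rv0 !rlt_k2 // rv_mul rv_norm2 /qv /=.
by rewrite expr2.
Qed.

Set Implicit Arguments. Unset Strict Implicit.

Definition lamc n m l := nfc n m (nunpair (nunpair l).2).1.
Definition gamc n m l := nfc n m (nunpair (nunpair l).2).2.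

Definition reqb n m K T l :=
  if (nunpair l).1 == 0 then near_c K (posform_c n m T (nunpair l).2)
  else rlt (rmul (qnorm2_c (qsub_c (tau_c T (gmulc n m (ginvc n m (gamc n m l)) (gmulc n m (lamc n m l) (gamc n m l))))
                                   (tau_c T (lamc n m l)))) (kk K)) rone.

Lemma reqbE n m K T l : 0 < K -> reqb n m K T l <-> relaxed_req n m K (tauT T) l.
Proof.
move=> HK; rewrite /reqb /relaxed_req.
case: (_ == 0).
  by rewrite near_cE // qv_posform.
rewrite rlt_k2 // rv_norm2 qv_sub /tauT /gmulc /ginvc /lamc /gamc /nfc !code_wordK.
by [].
Qed.

Lemma pr_near k fK fz : pr k fK -> pr k fz -> prb k (fun a => near_c (fK a) (fz a)).
Proof.
move=> HK Hz; rewrite /near_c.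
have Z1 := pr_fst Hz; have Z2 := pr_snd Hz.
have Hkk : pr k (fun a => kk (fK a)) by apply: pr_mkr; [apply: pr_mul|apply: pr_zero|apply: pr_zero].
have Hone : pr k (fun _ => rone) by apply: pr_const.
apply: prb_if; first by apply: prb_rle => //; apply: pr_const.
  by apply: prb_rlt => //; apply: pr_rmul => //; apply: pr_rmul.
by apply: prb_rlt => //; apply: pr_rmul => //; apply: pr_qnorm2.
Qed.

Lemma pr_reqb k fn fm fK fT fl : pr k fn -> pr k fm -> pr k fK -> pr k fT -> pr k fl ->
  prb k (fun a => reqb (fn a) (fm a) (fK a) (fT a) (fl a)).
Proof.
move=> Hn Hm HK HT Hl; rewrite /reqb.
have L2 := pr_snd Hl.
have Hkk : pr k (fun a => kk (fK a)) by apply: pr_mkr; [apply: pr_mul|apply: pr_zero|apply: pr_zero].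
have Hone : pr k (fun _ => rone) by apply: pr_const.
have Hlam : pr k (fun a => lamc (fn a) (fm a) (fl a)) by apply: pr_nfc => //; apply: pr_fst.
have Hgam : pr k (fun a => gamc (fn a) (fm a) (fl a)) by apply: pr_nfc => //; apply: pr_snd.
apply: prb_if; first by apply: prb_eq0; apply: pr_fst.
  by apply: pr_near => //; apply: pr_posform.
apply: prb_rlt => //; apply: pr_rmul => //; apply: pr_qnorm2; apply: pr_qsub; apply: pr_tau => //.
apply: pr_gmulc => //; first by apply: pr_ginvc.
by apply: pr_gmulc.
Qed.

Definition tauext_c n m T c :=
  foldr (fun e acc => qadd_c (qmul_c (cqi (nunpair e).1) (tau_c T (nfc n m (nunpair e).2))) acc) 0 (decode_list c).

Lemma decode_qi_code a : decode_qi (code_qi a) = a.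
Proof. by case: a => x y; rewrite /decode_qi /code_qi np1 np2 !decode_rat_code. Qed.

Lemma tauext_cE n m T x : qv (tauext_c n m T (code_gralg x)) = tau_ext n m (tauT T) x.
Proof.
rewrite /tauext_c /code_gralg code_listK foldr_map qv_foldr /tau_ext.
apply: eq_foldr => aw acc; rewrite qv_mul qv_cqi np1 np2 decode_qi_code.
by rewrite /tauT /nfc code_wordK.
Qed.

Lemma pr_tauext k fn fm fT fc : pr k fn -> pr k fm -> pr k fT -> pr k fc ->
  pr k (fun a => tauext_c (fn a) (fm a) (fT a) (fc a)).
Proof.
move=> Hn Hm HT Hc.
have Hg : pr k.+2 (fun b => qadd_c (qmul_c (cqi (nunpair (nth 0 b 0)).1)
     (tau_c (fT (drop 2 b)) (nfc (fn (drop 2 b)) (fm (drop 2 b)) (nunpair (nth 0 b 0)).2))) (nth 0 b 1)).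
  apply: pr_qadd; last exact: pr_proj.
  apply: pr_qmul; first by apply: pr_cqi; apply: pr_fst; apply: pr_proj.
  apply: pr_tau; first exact: (pr_shift 2 HT).
  apply: pr_nfc; [exact: (pr_shift 2 Hn)|exact: (pr_shift 2 Hm)|].
  by apply: pr_snd; apply: pr_proj.
have := pr_foldr Hg Hc (pr_zero _).
by move=> H; apply: (pr_ext H) => a _ /=; rewrite /tauext_c drop0.
Qed.

Lemma pr_s (s : sfun) k f1 f2 f3 f4 f5 f6 f7 : computable_s s ->
  pr k f1 -> pr k f2 -> pr k f3 -> pr k f4 -> pr k f5 -> pr k f6 -> pr k f7 ->
  pr k (fun a => code_gralg (s (f1 a) (f2 a) (f3 a) (f4 a) (f5 a) (f6 a) (f7 a))).
Proof.
move=> [e He] H1 H2 H3 H4 H5 H6 H7.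
have [P HP] : pr k (fun a => code_list [:: f1 a; f2 a; f3 a; f4 a; f5 a; f6 a; f7 a]).
  do 7! (apply: pr_ccons => //); exact: pr_zero.
exists (PComp e [:: P]) => a Ha.
econstructor; first by constructor; [exact: HP|constructor].
exact: He.
Qed.

Lemma prb_allc k P c : prb k.+1 P -> pr k c ->
  prb k (fun a => all (fun x => P (x :: a)) (decode_list (c a))).
Proof.
move=> HP Hc.
have Hg : pr k.+2 (fun b => P (nth 0 b 0 :: drop 2 b) * nth 0 b 1).
  apply: pr_mul; last exact: pr_proj.
  have Hs' : pr (size (0 :: iota 2 k)) (fun a => nat_of_bool (P a)) by rewrite /= size_iota.
  apply: (pr_ext (pr_reindex k.+2 Hs')) => b Hb.
  by rewrite /= -drop_iotaN Hb !subSS subn0.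
have := pr_foldr Hg Hc (pr_const _ 1).
move=> H; apply: (pr_ext H) => a _ /=.
elim: (decode_list (c a)) => //= x l ->; rewrite drop0.
by case: (P _); case: (all _ _).
Qed.

(* the top-level check; context a = [:: T; z] *)
Definition zN z := cnth 0 z.
Definition zM z := cnth 1 z.
Definition zK z := cnth 2 z.
Definition zP z := cnth 3 z.

Definition adapt4 (s : sfun) (b : seq nat) : bool :=
  rlt (rmul (qnorm2_c (qsub_c
     (npair (crat (cnth (((nth 0 b 3 * zN (nth 0 b 5) + nth 0 b 2) * zM (nth 0 b 5) + nth 0 b 1) * zM (nth 0 b 5) + nth 0 b 0) (zP (nth 0 b 5)))) 0)
     (tauext_c (zN (nth 0 b 5)) (zM (nth 0 b 5)) (nth 0 b 4)
        (code_gralg (s (nth 0 b 3) (nth 0 b 2) (nth 0 b 1) (nth 0 b 0) (zK (nth 0 b 5)) (zN (nth 0 b 5)) (zM (nth 0 b 5)))))))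
    (kk (zK (nth 0 b 5)))) rone.
Definition adapt3 s b := all (fun j => adapt4 s (j :: b)) (iota 0 (zM (nth 0 b 4))).
Definition adapt2 s b := all (fun i => adapt3 s (i :: b)) (iota 0 (zM (nth 0 b 3))).
Definition adapt1 s b := all (fun w => adapt2 s (w :: b)) (iota 0 (zN (nth 0 b 2))).
Definition adapt0 s a := all (fun v => adapt1 s (v :: a)) (iota 0 (zN (nth 0 a 1))).

Definition approx1 (b : seq nat) := reqb (zN (nth 0 b 2)) (zM (nth 0 b 2)) (zK (nth 0 b 2)) (nth 0 b 1) (nth 0 b 0).
Definition approx0 a := all (fun l => approx1 (l :: a)) (iota 0 (zK (nth 0 a 1))).

Definition disc1 (b : seq nat) := rle (qnorm2_c (nunpair (nth 0 b 0)).2) rone.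
Definition disc0 a := all (fun e => disc1 (e :: a)) (decode_list (nth 0 a 0)).

Definition check s a := [&& disc0 a, approx0 a & adapt0 s a].

Lemma pr_check s : computable_s s -> prb 2 (check s).
Proof.
move=> Hs.
have Pz : forall k i, pr k (fun b => zN (nth 0 b i)) /\ pr k (fun b => zM (nth 0 b i))
   /\ pr k (fun b => zK (nth 0 b i)) /\ pr k (fun b => zP (nth 0 b i)).
  by move=> k i; do !split; apply: pr_cnth; try apply: pr_const; apply: pr_proj.
apply: prb_and.
  apply: prb_allc; last exact: pr_proj.
  apply: prb_rle; last exact: pr_const.
  by apply: pr_qnorm2; apply: pr_snd; apply: pr_proj.
apply: prb_and.
  have [N [M [K _]]] := Pz 3 2.
  apply: prb_all; last by have [_ [_ [H _]]] := Pz 2 1.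
  by apply: pr_reqb => //; apply: pr_proj.
apply: prb_all; last by have [H _] := Pz 2 1.
apply: prb_all; last by have [H _] := Pz 3 2.
apply: prb_all; last by have [_ [H _]] := Pz 4 3.
apply: prb_all; last by have [_ [H _]] := Pz 5 4.
have [N [M [K P]]] := Pz 6 5.
rewrite /prb /adapt4.
apply: prb_rlt; last exact: pr_const.
apply: pr_rmul; last by apply: pr_mkr; [apply: pr_mul|apply: pr_zero|apply: pr_zero].
apply: pr_qnorm2; apply: pr_qsub.
  apply: pr_npair; last exact: pr_zero.
  apply: pr_crat; apply: pr_cnth => //.
  by repeat (apply: pr_add || apply: pr_mul || apply: pr_proj || assumption).
apply: pr_tauext => //; first exact: pr_proj.
by apply: pr_s => //; apply: pr_proj.
Qed.

Set Implicit Arguments. Unset Strict Implicit.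

Lemma size_flatten_u (A : Type) (F : A -> seq nat) (s : seq A) L :
  (forall a, size (F a) = L) -> size (flatten (map F s)) = size s * L.
Proof. move=> H; elim: s => //= a s IH; by rewrite size_cat IH H mulSn. Qed.

Lemma nth_flatten_u (A : Type) (F : A -> seq nat) (s : seq A) a0 L i j :
  (forall a, size (F a) = L) -> i < size s -> j < L ->
  nth 0 (flatten (map F s)) (i * L + j) = nth 0 (F (nth a0 s i)) j.
Proof.
move=> H; elim: s i => //= a s IH [|i] Hi Hj.
  by rewrite mul0n add0n nth_cat H Hj.
rewrite nth_cat H mulSn -addnA ltnNge leq_addr /= addKn IH //.
Qed.

Definition pcode n m (p : 'I_n -> 'I_n -> 'I_m -> 'I_m -> rat) :=
  flatten [seq flatten [seq flatten [seq [seq code_rat (p v w i j)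
        | j <- enum 'I_m] | i <- enum 'I_m] | w <- enum 'I_n] | v <- enum 'I_n].

Lemma pcode_nth n m p (v w : 'I_n) (i j : 'I_m) :
  nth 0 (pcode p) (((v * n + w) * m + i) * m + j) = code_rat (p v w i j).
Proof.
have E : ((v * n + w) * m + i) * m + j = v * (n * (m * m)) + (w * (m * m) + (i * m + j)) by nia.
have S3 : forall (v : 'I_n) (w : 'I_n) (i : 'I_m), size [seq code_rat (p v w i j) | j <- enum 'I_m] = m.
  by move=> *; rewrite size_map size_enum_ord.
have S2 : forall (v : 'I_n) (w : 'I_n), size (flatten [seq [seq code_rat (p v w i j) | j <- enum 'I_m] | i <- enum 'I_m]) = m * m.
  by move=> *; rewrite (size_flatten_u _ (S3 _ _)) size_enum_ord.
have S1 : forall (v : 'I_n), size (flatten [seq flatten [seq [seq code_rat (p v w i j) | j <- enum 'I_m] | i <- enum 'I_m] | w <- enum 'I_n]) = n * (m * m).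
  by move=> *; rewrite (size_flatten_u _ (S2 _)) size_enum_ord.
have Hv : nth v (enum 'I_n) v = v by apply: val_inj; rewrite /= nth_enum_ord.
have Hw : nth w (enum 'I_n) w = w by apply: val_inj; rewrite /= nth_enum_ord.
have Hi : nth i (enum 'I_m) i = i by apply: val_inj; rewrite /= nth_enum_ord.
have Hj : forall (j' : 'I_m), nth j' (enum 'I_m) j' = j' by move=> j'; apply: val_inj; rewrite /= nth_enum_ord.
rewrite E /pcode (nth_flatten_u v S1) ?size_enum_ord //; last first.
  have : w * (m * m) + (i * m + j) < n * (m * m); last by [].
  have := ltn_ord w; have := ltn_ord i; have := ltn_ord j; nia.
rewrite Hv (nth_flatten_u w (S2 v)) ?size_enum_ord //; last first.
  have := ltn_ord i; have := ltn_ord j; nia.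
rewrite Hw (nth_flatten_u i (S3 v w)) ?size_enum_ord //.
rewrite Hi (nth_map j) ?size_enum_ord // Hj //.
Qed.

Lemma code_inputE n m k p :
  code_input n m k p = code_list [:: n; m; k; code_list (pcode p)].
Proof. by []. Qed.

Lemma zNE n m k p : zN (code_input n m k p) = n.
Proof. by rewrite /zN cnthE code_inputE code_listK. Qed.
Lemma zME n m k p : zM (code_input n m k p) = m.
Proof. by rewrite /zM cnthE code_inputE code_listK. Qed.
Lemma zKE n m k p : zK (code_input n m k p) = k.
Proof. by rewrite /zK cnthE code_inputE code_listK. Qed.
Lemma zPE n m k p : zP (code_input n m k p) = code_list (pcode p).
Proof. by rewrite /zP cnthE code_inputE code_listK. Qed.

Lemma tau_c_cases T c : tau_c T c = 0 \/ exists2 e, e \in decode_list T & tau_c T c = (nunpair e).2.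
Proof.
rewrite /tau_c; elim: (decode_list T) => [|e l IH] /=; first by left.
case: (_ == c); first by right; exists e; rewrite ?mem_head.
case: IH => [->|[e' He' ->]]; first by left.
by right; exists e'; rewrite // in_cons He' orbT.
Qed.

Lemma qv_rat r : qv (npair r 0) = qi_of_rat (rv r).
Proof. by rewrite /qv np1 np2 rv0. Qed.

Lemma check_sound (s : sfun) n m k p T : 0 < k ->
  check s [:: T; code_input n m k p] -> in_X n m k s p.
Proof.
move=> Hk /and3P [Hd Ha Hp]; exists (tauT T); split.
- move=> w; rewrite /tauT.
  case: (tau_c_cases T (code_word (nf n m w))) => [->|[e He ->]].
    by rewrite qv0 /qnorm2 /= expr2 mulr0 addr0.
  move/allP: Hd => /(_ e He); rewrite /disc1 /= rv_le rv_norm2 rv_one.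
  by [].
- move=> l Hl; apply/reqbE => //.
  move/allP: Ha => /(_ l); rewrite mem_iota /= zKE add0n => /(_ Hl).
  by rewrite /approx1 /= zNE zME zKE.
- move=> v w i j.
  move/allP: Hp => /(_ v); rewrite mem_iota /= zNE add0n ltn_ord => /(_ isT).
  move/allP => /(_ w); rewrite mem_iota /= zNE add0n ltn_ord => /(_ isT).
  move/allP => /(_ i); rewrite mem_iota /= zME add0n ltn_ord => /(_ isT).
  move/allP => /(_ j); rewrite mem_iota /= zME add0n ltn_ord => /(_ isT).
  rewrite /adapt4 /= zNE zME zKE zPE rlt_k2 // rv_norm2 qv_sub qv_rat tauext_cE.
  by rewrite cnthE code_listK pcode_nth rv_crat decode_rat_code.
Qed.

Set Implicit Arguments. Unset Strict Implicit.

Definition reqwords n m l : seq word :=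
  let xs := map (decg n m) (decode_list (nunpair l).2) in
  let lam := group_elt n m (nunpair (nunpair l).2).1 in
  let gam := group_elt n m (nunpair (nunpair l).2).2 in
  if (nunpair l).1 == 0 then [seq gmul n m (ginv n m p.2) q.2 | p <- xs, q <- xs]
  else [:: gmul n m (ginv n m gam) (gmul n m lam gam); lam].

Lemma req_agree n m k tau1 tau2 l : {in reqwords n m l, tau1 =1 tau2} ->
  relaxed_req n m k tau1 l -> relaxed_req n m k tau2 l.
Proof.
rewrite /relaxed_req /reqwords; case: (_ == 0) => H.
  suff -> : pos_form n m tau2 (map (decg n m) (decode_list (nunpair l).2)) =
            pos_form n m tau1 (map (decg n m) (decode_list (nunpair l).2)) by [].
  rewrite /pos_form; congr (foldr _ _ _); apply/eq_in_allpairs => p q Hp Hq /=.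
  congr qmul; symmetry; apply: H; apply/allpairsP; exists (p, q); split => //.
rewrite -!H //; [by rewrite in_cons mem_head orbT|by rewrite mem_head].
Qed.

Lemma tauext_agree n m tau1 tau2 x : {in [seq nf n m aw.2 | aw <- x], tau1 =1 tau2} ->
  tau_ext n m tau1 x = tau_ext n m tau2 x.
Proof.
elim: x => //= aw x IH H; rewrite /tau_ext /= -/(tau_ext n m tau1 x) -/(tau_ext n m tau2 x).
rewrite H ?mem_head // IH // => w Hw; apply: H; by rewrite in_cons Hw orbT.
Qed.

Definition adwords (s : sfun) n m k : seq word :=
  flatten [seq flatten [seq flatten [seq flatten [seq [seq nf n m aw.2 | aw <- s v w i j k n m]
     | j <- iota 0 m] | i <- iota 0 m] | w <- iota 0 n] | v <- iota 0 n].

Definition allwords s n m k := flatten [seq reqwords n m l | l <- iota 0 k] ++ adwords s n m k.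

Lemma allwords_nf s n m k w : w \in allwords s n m k -> exists w', w = nf n m w'.
Proof.
rewrite mem_cat => /orP [/flatten_mapP [l _]|/flatten_mapP [v _ /flatten_mapP [w1 _
   /flatten_mapP [i _ /flatten_mapP [j _ /mapP [aw _ ->]]]]]]; last by exists aw.2.
rewrite /reqwords; case: (_ == 0).
  by move=> /allpairsP [[p q] [_ _ ->]]; exists (ginv n m p.2 ++ q.2).
rewrite !inE => /orP [/eqP ->|/eqP ->].
  by eexists.
by eexists.
Qed.

Definition encq (q : Qi) := npair (crat (code_rat q.1)) (crat (code_rat q.2)).
Lemma qv_encq q : qv (encq q) = q.
Proof. by case: q => x y; rewrite /qv /encq np1 np2 !rv_crat !decode_rat_code. Qed.

Definition Tbl (tau : word -> Qi) (W : seq word) := code_list [seq npair (code_word w) (encq (tau w)) | w <- W].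

Lemma tauT_tbl tau W w : w \in W -> tauT (Tbl tau W) w = tau w.
Proof.
move=> Hw; rewrite /tauT /tau_c /Tbl code_listK.
elim: W Hw => [|w0 W IH] //; rewrite map_cons in_cons.
set f := fun e acc => _.
have -> : forall x l, foldr f 0 (x :: l) = f x (foldr f 0 l) by [].
rewrite {1}/f np1 np2.
case: (eqVneq (code_word w0) (code_word w)) => [E _|NE /orP [/eqP E|Hw]].
- by move: (E) => /(f_equal decw); rewrite !code_wordK => ->; rewrite qv_encq.
- by rewrite E eqxx in NE.
- exact: IH.
Qed.

Lemma check_complete (s : sfun) n m k p : 0 < k ->
  in_X n m k s p -> exists T, check s [:: T; code_input n m k p].
Proof.
move=> Hk [tau [Hd Ha Hp]].
set W := allwords s n m k.
have HT : forall w, w \in W -> tauT (Tbl tau W) w = tau w by move=> w; exact: tauT_tbl.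
exists (Tbl tau W); apply/and3P; split.
- apply/allP => e; rewrite /Tbl /= code_listK => /mapP [w Hw ->].
  rewrite /disc1 [nth _ _ 0]/= np2 rv_le rv_norm2 qv_encq rv_one.
  by have [w' ->] := allwords_nf Hw; apply: Hd.
- apply/allP => l; rewrite mem_iota /= zKE add0n => Hl.
  rewrite /approx1 /= zNE zME zKE; apply/reqbE => //.
  apply: (@req_agree _ _ _ tau) => [w Hw|]; last exact: Ha.
  rewrite HT //; rewrite mem_cat; apply/orP; left; apply/flatten_mapP; exists l => //.
  by rewrite mem_iota.
- apply/allP => v; rewrite mem_iota /= zNE add0n => Hv.
  apply/allP => w; rewrite mem_iota /= zNE add0n => Hw.
  apply/allP => i; rewrite mem_iota /= zME add0n => Hi.
  apply/allP => j; rewrite mem_iota /= zME add0n => Hj.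
  have := Hp (Ordinal Hv) (Ordinal Hw) (Ordinal Hi) (Ordinal Hj).
  rewrite /adapt4 /= zNE zME zKE zPE rlt_k2 // rv_norm2 qv_sub qv_rat tauext_cE.
  rewrite cnthE code_listK (pcode_nth p (Ordinal Hv) (Ordinal Hw) (Ordinal Hi) (Ordinal Hj)).
  rewrite rv_crat decode_rat_code /=.
  rewrite (@tauext_agree _ _ (tauT (Tbl tau W)) tau) // => w' Hw'.
  rewrite HT // mem_cat; apply/orP; right.
  apply/flatten_mapP; exists v; first by rewrite mem_iota.
  apply/flatten_mapP; exists w; first by rewrite mem_iota.
  apply/flatten_mapP; exists i; first by rewrite mem_iota.
  apply/flatten_mapP; exists j; first by rewrite mem_iota.
  exact: Hw'.
Qed.

Local Open Scope ring_scope.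

Theorem lemma4p2 (s : sfun) (Hs : computable_s s) :
  exists e : prog,
    forall (n m k : nat), (2 <= n)%N -> (2 <= m)%N -> (1 <= k)%N ->
    forall p : 'I_n -> 'I_n -> 'I_m -> 'I_m -> rat,
      (forall v w i j, 0 <= p v w i j <= 1) ->
      (in_X n m k s p <-> halts e (code_input n m k p)).
Proof.
have [C HC] : pr 2 (fun a => (1 - nat_of_bool (check s a))%N).
  exact: pr_sub (pr_const 2 1) (pr_check Hs).
exists (PMu C) => n m k _ _ Hk p _.
set z := code_input n m k p.
split.
- move=> HX; have ex : exists T, check s [:: T; z] by exact: check_complete.
  case: (ex_minnP ex) => T0 HT0 Hmin.
  exists T0; apply: eMu.
    by have := HC [:: T0; z] erefl; rewrite HT0.
  move=> i Hi; exists (1 - nat_of_bool (check s [:: i; z]))%N; last exact: HC.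
  case Ei: (check s [:: i; z]) => //.
  by have := Hmin i Ei; rewrite leqNgt Hi.
- move=> [y Hy]; inversion Hy; subst.
  have E := eval_det _ _ _ _ H0 (HC [:: y; z] erefl).
  apply: (@check_sound s n m k p y) => //.
  by move: E; case: (check s _).
Qed.
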